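(* Consider problem (VP) under the standing assumptions at $\bar x\in Q_0$. Suppose $\bar x$ is a local weak efficient solution of (VP) (in particular, this applies if $\bar x$ is a local efficient solution), and that the weak Abadie regularity condition holds at $\bar x$, i.e. $L(Q;\bar x)\subset T(Q_0;\bar x)$, where $L(Q;\bar x):=\{v\in X: f_i^{\circ}(\bar x,v)\leqq0\ \forall i\in I,\ g_j^{\circ}(\bar x,v)\leqq 0\ \forall j\in J(\bar x)\}$. Then there is no $u\in X$ with $f_i^{\circ}(\bar x,u)<0$ for all $i\in I$ and $g_j^{\circ}(\bar x,u)\leqq0$ for all $j\in J(\bar x)$.
   Context: Standing setting: $X$ is a Banach space; $I=\{1,\dots,p\}$, $J=\{1,\dots,m\}$; $f_i,g_j\colon X\to\mathbb{R}$; (VP) minimizes $f=(f_1,\dots,f_p)$ over $Q_0:=\{x\in X: g_j(x)\leqq 0,\ j\in J\}$. $J(\bar x):=\{j\in J: g_j(\bar x)=0\}$. Standing assumptions: $f_i$ ($i\in I$), $g_j$ ($j\in J(\bar x)$) locally Lipschitz at $\bar x$; $g_j$ ($j\notin J(\bar x)$) continuous at $\bar x$. $Q:=Q_0\cap\{x: f_i(x)\leqq f_i(\bar x),\ i\in I\}$. Clarke derivative: $F^{\circ}(\bar x,u):=\limsup_{x\to\bar x,\,t\downarrow0}\frac{F(x+tu)-F(x)}{t}$. Tangent cone: $T(\Omega;\bar x):=\{d:\exists t_k\downarrow0,\ \exists d^k\to d,\ \bar x+t_kd^k\in\Omega\ \forall k\}$. $\bar x\in Q_0$ is a local weak efficient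 solution if there is a neighborhood $U$ of $\bar x$ such that no $x\in U\cap Q_0$ satisfies $f_i(x)<f_i(\bar x)$ for all $i\in I$; it is a local efficient solution if no $x\in U\cap Q_0$ satisfies $f(x)\leqq f(\bar x)$ componentwise with $f(x)\neq f(\bar x)$. *)

(* Defs.v *)
From Stdlib Require Import Reals Lra ClassicalEpsilon.
Open Scope R_scope.

Record BanachSpace := mkBanach {
  bcar :> Type;
  badd : bcar -> bcar -> bcar;
  bzero : bcar;
  bopp : bcar -> bcar;
  bscal : R -> bcar -> bcar;
  bnorm : bcar -> R;
  badd_assoc : forall x y z, badd x (badd y z) = badd (badd x y) z;
  badd_comm : forall x y, badd x y = badd y x;
  badd_zero : forall x, badd x bzero = x;
  badd_opp : forall x, badd x (bopp x) = bzero;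
  bscal_assoc : forall a b x, bscal a (bscal b x) = bscal (a * b) x;
  bscal_one : forall x, bscal 1 x = x;
  bscal_distr_v : forall a x y, bscal a (badd x y) = badd (bscal a x) (bscal a y);
  bscal_distr_s : forall a b x, bscal (a + b) x = badd (bscal a x) (bscal b x);
  bnorm_nonneg : forall x, 0 <= bnorm x;
  bnorm_eq0 : forall x, bnorm x = 0 -> x = bzero;
  bnorm_scal : forall a x, bnorm (bscal a x) = Rabs a * bnorm x;
  bnorm_triangle : forall x y, bnorm (badd x y) <= bnorm x + bnorm y;
  bcomplete : forall u : nat -> bcar,
    (forall eps, eps > 0 -> exists N, forall n m, (n >= N)%nat -> (m >= N)%nat ->
        bnorm (badd (u n) (bopp (u m))) < eps) ->
    exists l, Un_cv (fun n => bnorm (badd (u n) (bopp l))) 0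
}.

Arguments badd {_}. Arguments bzero {_}. Arguments bopp {_}.
Arguments bscal {_}. Arguments bnorm {_}.

Definition bsub {X : BanachSpace} (x y : X) : X := badd x (bopp y).

Definition loc_lipschitz {X : BanachSpace} (F : X -> R) (xb : X) : Prop :=
  exists K delta, delta > 0 /\
    forall x y, bnorm (bsub x xb) < delta -> bnorm (bsub y xb) < delta ->
      Rabs (F x - F y) <= K * bnorm (bsub x y).

Definition continuous_at {X : BanachSpace} (F : X -> R) (xb : X) : Prop :=
  forall eps, eps > 0 -> exists delta, delta > 0 /\
    forall x, bnorm (bsub x xb) < delta -> Rabs (F x - F xb) < eps.

Definition is_clarke_limsup {X : BanachSpace} (F : X -> R) (xb u : X) (l : R) : Prop :=
  (forall eps, eps > 0 -> exists delta, delta > 0 /\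
     forall x t, bnorm (bsub x xb) < delta -> 0 < t < delta ->
       (F (badd x (bscal t u)) - F x) / t < l + eps) /\
  (forall eps delta, eps > 0 -> delta > 0 -> exists x t,
     bnorm (bsub x xb) < delta /\ 0 < t < delta /\
     (F (badd x (bscal t u)) - F x) / t > l - eps).

(* Clarke generalized directional derivative F°(xb,u); it is the genuine
   (finite) limsup whenever F is locally Lipschitz at xb. *)
Definition clarke {X : BanachSpace} (F : X -> R) (xb u : X) : R :=
  epsilon (inhabits 0) (is_clarke_limsup F xb u).

Definition tangent_cone {X : BanachSpace} (Omega : X -> Prop) (xb : X) : X -> Prop :=
  fun d => exists (t : nat -> R) (dk : nat -> X),
    (forall k, t k > 0) /\ Un_cv t 0 /\
    Un_cv (fun k => bnorm (bsub (dk k) d)) 0 /\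
    (forall k, Omega (badd xb (bscal (t k) (dk k)))).

(* Problem (VP): f i (1 <= i <= p) objectives, g j (1 <= j <= m) constraints. *)
Definition feasible {X : BanachSpace} (m : nat) (g : nat -> X -> R) (x : X) : Prop :=
  forall j, (1 <= j <= m)%nat -> g j x <= 0.

Definition active {X : BanachSpace} (m : nat) (g : nat -> X -> R) (xb : X) (j : nat) : Prop :=
  (1 <= j <= m)%nat /\ g j xb = 0.

Definition local_weak_efficient {X : BanachSpace} (p m : nat)
  (f g : nat -> X -> R) (xb : X) : Prop :=
  feasible m g xb /\
  exists delta, delta > 0 /\
    ~ (exists x, bnorm (bsub x xb) < delta /\ feasible m g x /\
         forall i, (1 <= i <= p)%nat -> f i x < f i xb).

Definition L_cone {X : BanachSpace} (p m : nat) (f g : nat -> X -> R) (xb : X) : X -> Prop :=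
  fun v => (forall i, (1 <= i <= p)%nat -> clarke (f i) xb v <= 0) /\
           (forall j, active m g xb j -> clarke (g j) xb v <= 0).

(* Main.v *)
Require Import Defs.
From Stdlib Require Import Reals.
From Stdlib Require Import Reals Lra Lia Classical ClassicalEpsilon.
Open Scope R_scope.

Section Alg.
Variable X : BanachSpace.

Lemma add0l (x : X) : badd bzero x = x.
Proof. rewrite badd_comm; apply badd_zero. Qed.

Lemma cancel_self (a : X) : badd a a = a -> a = bzero.
Proof.
  intro H. transitivity (badd (badd a a) (bopp a)).
  - rewrite <- badd_assoc, badd_opp, badd_zero. reflexivity.
  - rewrite H. apply badd_opp.
Qed.

Lemma opp_unique (x y : X) : badd x y = bzero -> y = bopp x.
Proof.
  intro H. rewrite <- (badd_zero X y). rewrite <- (badd_opp X x).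
  rewrite badd_assoc, (badd_comm X y x), H. apply add0l.
Qed.

Lemma scal0l (x : X) : bscal 0 x = bzero.
Proof. apply cancel_self. rewrite <- bscal_distr_s. f_equal; ring. Qed.

Lemma scal0r (t : R) : bscal t (@bzero X) = bzero.
Proof. transitivity (bscal t (bscal 0 (@bzero X))).
  - rewrite scal0l. reflexivity.
  - rewrite bscal_assoc. replace (t*0) with 0 by ring. apply scal0l. Qed.

Lemma scal_opp (t : R) (u : X) : bscal t (bopp u) = bopp (bscal t u).
Proof. apply opp_unique. rewrite <- bscal_distr_v, badd_opp. apply scal0r. Qed.

Lemma opp_add (a b : X) : bopp (badd a b) = badd (bopp a) (bopp b).
Proof.
  symmetry. apply opp_unique.
  rewrite badd_assoc. rewrite <- (badd_assoc X a b (bopp a)).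
  rewrite (badd_comm X b (bopp a)), badd_assoc, badd_opp, add0l.
  apply badd_opp.
Qed.

Lemma L1 (xb v : X) : bsub (badd xb v) xb = v.
Proof.
  unfold bsub. rewrite (badd_comm X xb v), <- badd_assoc, badd_opp. apply badd_zero.
Qed.

Lemma L2 (xb d u : X) (t : R) :
  bsub (badd xb (bscal t d)) (badd xb (bscal t u)) = bscal t (bsub d u).
Proof.
  unfold bsub. rewrite bscal_distr_v, scal_opp, opp_add.
  rewrite <- badd_assoc. rewrite (badd_assoc X (bscal t d) (bopp xb) (bopp (bscal t u))).
  rewrite (badd_comm X (bscal t d) (bopp xb)).
  rewrite <- badd_assoc, badd_assoc, badd_opp, add0l. reflexivity.
Qed.

Lemma L3 (d u : X) : d = badd u (bsub d u).
Proof.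
  unfold bsub. rewrite (badd_comm X d (bopp u)), badd_assoc, badd_opp, add0l. reflexivity.
Qed.

Lemma L4 (x xb : X) (t : R) (u : X) :
  bsub (badd x (bscal t u)) xb = badd (bsub x xb) (bscal t u).
Proof.
  unfold bsub. rewrite <- !badd_assoc. f_equal. apply badd_comm.
Qed.

Lemma norm_scal_pos (t : R) (v : X) : t > 0 -> bnorm (bscal t v) = t * bnorm v.
Proof. intro. rewrite bnorm_scal, Rabs_right; lra. Qed.

End Alg.

Lemma Rabs_le_inv (a b : R) : Rabs a <= b -> - b <= a <= b.
Proof. intro H. pose proof (Rle_abs a). pose proof (Rle_abs (- a)). rewrite Rabs_Ropp in H1. lra. Qed.

Lemma clarke_exists (X : BanachSpace) (F : X -> R) (xb u : X) :
  loc_lipschitz F xb -> exists l, is_clarke_limsup F xb u l.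
Proof.
  intros [K [d0 [Hd0 HL]]].
  set (nu := bnorm u).
  assert (Hnu : 0 <= nu) by apply bnorm_nonneg.
  set (ds := d0 / (nu + 2)).
  assert (Hds : 0 < ds) by (unfold ds; apply Rdiv_lt_0_compat; lra).
  assert (Hds2 : ds * (1 + nu) < d0).
  { assert (E : ds * (nu + 2) = d0) by (unfold ds; field; lra).
    assert (E2 : ds * (1 + nu) = d0 - ds) by (rewrite <- E; ring). lra. }
  set (val := fun x t => (F (badd x (bscal t u)) - F x) / t).
  assert (Hbnd : forall x t, bnorm (bsub x xb) < ds -> 0 < t < ds ->
            Rabs (val x t) <= Rabs K * nu).
  { intros x t Hx Ht. unfold val.
    assert (Hds1 : ds <= d0) by nra.
    assert (H1 : bnorm (bsub (badd x (bscal t u)) xb) < d0).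
    { rewrite L4. eapply Rle_lt_trans; [apply bnorm_triangle|].
      rewrite norm_scal_pos by lra. fold nu. nra. }
    pose proof (HL _ _ H1 (ltac:(lra) : bnorm (bsub x xb) < d0)) as HH.
    rewrite L1, norm_scal_pos in HH by lra. fold nu in HH.
    unfold Rdiv. rewrite Rabs_mult, Rabs_inv, (Rabs_right t) by lra.
    assert (Habs : Rabs (F (badd x (bscal t u)) - F x) <= Rabs K * nu * t).
    { eapply Rle_trans; [apply HH|].
      replace (Rabs K*nu*t) with (Rabs K*(t*nu)) by ring.
      apply Rmult_le_compat_r; [apply Rmult_le_pos; lra|apply RRle_abs]. }
    replace (Rabs K * nu) with (Rabs K * nu * t * / t) by (field; lra).
    apply Rmult_le_compat_r; [left; apply Rinv_0_lt_compat; lra| exact Habs]. }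
  set (A := fun z => forall d, d > 0 -> exists x t,
              bnorm (bsub x xb) < d /\ 0 < t < d /\ val x t > z).
  assert (Hwit : forall d, d > 0 -> exists x t,
              bnorm (bsub x xb) < Rmin d ds /\ 0 < t < Rmin d ds).
  { intros d Hd. exists xb, (Rmin d ds / 2).
    unfold bsub. rewrite badd_opp.
    assert (bnorm (@bzero X) = 0).
    { rewrite <- (scal0l X bzero), bnorm_scal, Rabs_R0. ring. }
    assert (0 < Rmin d ds) by (apply Rmin_glb_lt; lra). lra. }
  assert (HAb : bound A).
  { exists (Rabs K * nu). intros z Hz. destruct (Hz ds Hds) as [x [t [Hx [Ht Hv]]]].
    pose proof (Hbnd x t Hx Ht). pose proof (Rle_abs (val x t)). lra. }
  assert (HAn : exists z, A z).
  { exists (- (Rabs K * nu) - 1). intros d Hd.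
    destruct (Hwit d Hd) as [x [t [Hx Ht]]].
    pose proof (Rmin_l d ds). pose proof (Rmin_r d ds).
    exists x, t. split; [lra|]. split; [lra|].
    assert (Hb := Hbnd x t ltac:(lra) ltac:(lra)).
    pose proof (Rabs_pos (val x t)). apply Rabs_le_inv in Hb. lra. }
  destruct (completeness A HAb HAn) as [l [Hub Hlub]].
  exists l. split.
  - intros eps Heps.
    apply NNPP. intro Hn.
    assert (HA : A (l + eps / 2)).
    { intros d Hd. apply NNPP. intro Hn2. apply Hn. exists d. split; [lra|].
      intros x t Hx Ht. apply Rnot_le_lt. intro Hge. apply Hn2.
      exists x, t. unfold val in *. repeat split; lra. }
    pose proof (Hub _ HA). lra.
  - intros eps d Heps Hd.
    apply NNPP. intro Hn.
    assert (Hub2 : is_upper_bound A (l - eps)).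
    { intros z Hz. apply Rnot_lt_le. intro Hlt.
      destruct (Hz d Hd) as [x [t [Hx [Ht Hv]]]]. apply Hn.
      exists x, t. unfold val in *. repeat split; lra. }
    pose proof (Hlub _ Hub2). lra.
Qed.

Lemma clarke_spec (X : BanachSpace) (F : X -> R) (xb u : X) :
  loc_lipschitz F xb -> is_clarke_limsup F xb u (clarke F xb u).
Proof.
  intro H. unfold clarke. apply epsilon_spec. apply clarke_exists; exact H.
Qed.

Lemma key_i (X : BanachSpace) (F : X -> R) (xb u : X) (t : nat -> R) (dk : nat -> X) :
  loc_lipschitz F xb -> clarke F xb u < 0 -> (forall k, t k > 0) -> Un_cv t 0 ->
  Un_cv (fun k => bnorm (bsub (dk k) u)) 0 ->
  exists N, forall k, (k >= N)%nat -> F (badd xb (bscal (t k) (dk k))) < F xb.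
Proof.
  intros HLip Hc Ht Htc Hdc.
  pose proof (clarke_spec X F xb u HLip) as [Hup _].
  set (c := clarke F xb u) in *.
  destruct (Hup (- c / 2) ltac:(lra)) as [d1 [Hd1 H1]].
  destruct HLip as [K [d0 [Hd0 HL]]].
  set (nu := bnorm u). assert (Hnu : 0 <= nu) by apply bnorm_nonneg.
  set (m := Rmin d1 (d0 / (nu + 2))).
  assert (Hm : 0 < m) by (apply Rmin_glb_lt; [lra| apply Rdiv_lt_0_compat; lra]).
  assert (Hm1 : m <= d1) by apply Rmin_l.
  assert (Hm2 : m * (nu + 2) <= d0).
  { pose proof (Rmin_r d1 (d0/(nu+2))). fold m in H.
    apply Rmult_le_compat_r with (r := nu+2) in H; [|lra].
    field_simplify in H; lra. }
  set (e2 := Rmin 1 (- c / (2 * (Rabs K + 1)))).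
  assert (HK := Rabs_pos K).
  assert (He2 : 0 < e2) by (apply Rmin_glb_lt; [lra| apply Rdiv_lt_0_compat; lra]).
  destruct (Htc m Hm) as [N1 HN1].
  destruct (Hdc e2 He2) as [N2 HN2].
  exists (max N1 N2). intros k Hk.
  specialize (HN1 k ltac:(lia)). specialize (HN2 k ltac:(lia)).
  unfold Rdist in HN1, HN2. rewrite Rminus_0_r in HN1, HN2.
  pose proof (Ht k) as Htk.
  rewrite Rabs_right in HN1 by lra.
  rewrite Rabs_right in HN2 by (apply Rle_ge, bnorm_nonneg).
  set (tk := t k) in *. set (d := dk k) in *.
  set (w := bnorm (bsub d u)) in *.
  assert (He21 : e2 <= 1) by apply Rmin_l.
  assert (He22 : e2 <= - c / (2 * (Rabs K + 1))) by apply Rmin_r.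
  assert (Hb : bnorm (bsub xb xb) < d1).
  { unfold bsub. rewrite badd_opp, <- (scal0l X bzero), bnorm_scal, Rabs_R0. lra. }
  specialize (H1 xb tk Hb ltac:(lra)).
  assert (Hdiff1 : F (badd xb (bscal tk u)) - F xb < tk * (c / 2)).
  { apply (Rmult_lt_compat_r tk) in H1; [|lra].
    unfold Rdiv in H1. rewrite Rmult_assoc, Rinv_l, Rmult_1_r in H1 by lra. lra. }
  assert (Hnd : bnorm d <= nu + w).
  { rewrite (L3 X d u). apply bnorm_triangle. }
  assert (Ha : bnorm (bsub (badd xb (bscal tk d)) xb) < d0).
  { rewrite L1, norm_scal_pos by lra.
    assert (0 <= bnorm d) by apply bnorm_nonneg. nra. }
  assert (Hb2 : bnorm (bsub (badd xb (bscal tk u)) xb) < d0).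
  { rewrite L1, norm_scal_pos by lra. fold nu. nra. }
  pose proof (HL _ _ Ha Hb2) as HH.
  rewrite L2, norm_scal_pos in HH by lra. fold w in HH.
  apply Rabs_le_inv in HH.
  assert (Hw0 : 0 <= w) by apply bnorm_nonneg.
  assert (HKw : K * (tk * w) <= Rabs K * (tk * w)).
  { apply Rmult_le_compat_r; [nra| apply RRle_abs]. }
  assert (Hwc : (Rabs K + 1) * w < - c / 2).
  { assert (w < - c / (2 * (Rabs K + 1))) by lra.
    apply (Rmult_lt_compat_l (Rabs K + 1)) in H; [|lra].
    field_simplify in H; [|lra]. lra. }
  assert (Rabs K * (tk * w) <= tk * ((Rabs K + 1) * w)) by nra.
  assert (tk * ((Rabs K + 1) * w) < tk * (- c / 2)) by (apply Rmult_lt_compat_l; lra).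
  lra.
Qed.

Lemma combine (P : nat -> nat -> Prop) (n : nat) :
  (forall i, (1 <= i <= n)%nat -> exists N, forall k, (k >= N)%nat -> P i k) ->
  exists N, forall i, (1 <= i <= n)%nat -> forall k, (k >= N)%nat -> P i k.
Proof.
  induction n as [|n IH]; intro H.
  - exists 0%nat. intros. lia.
  - destruct IH as [N1 HN1]. { intros i Hi. apply H. lia. }
    destruct (H (S n) ltac:(lia)) as [N2 HN2].
    exists (max N1 N2). intros i Hi k Hk.
    destruct (Nat.eq_dec i (S n)) as [->|Hne].
    + apply HN2. lia.
    + apply HN1; lia.
Qed.

Theorem theorem4p1 (X : BanachSpace) (p m : nat) (f g : nat -> X -> R) (xb : X)
  (Hfeas : feasible m g xb)
  (Hf_lip : forall i, (1 <= i <= p)%nat -> loc_lipschitz (f i) xb)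
  (Hg_lip : forall j, active m g xb j -> loc_lipschitz (g j) xb)
  (Hg_cont : forall j, (1 <= j <= m)%nat -> ~ active m g xb j -> continuous_at (g j) xb)
  (Hwe : local_weak_efficient p m f g xb)
  (Habadie : forall v, L_cone p m f g xb v -> tangent_cone (feasible m g) xb v) :
  ~ (exists u : X,
       (forall i, (1 <= i <= p)%nat -> clarke (f i) xb u < 0) /\
       (forall j, active m g xb j -> clarke (g j) xb u <= 0)).
Proof.
  intros [u [Hfu Hgu]].
  assert (HLc : L_cone p m f g xb u).
  { split; [intros i Hi; left; apply Hfu; exact Hi | exact Hgu]. }
  destruct (Habadie u HLc) as [t [dk [Ht [Htc [Hdc Hfe]]]]].
  destruct (combine (fun i k => f i (badd xb (bscal (t k) (dk k))) < f i xb) p)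
    as [N HN].
  { intros i Hi. apply (key_i X (f i) xb u t dk); auto. }
  destruct Hwe as [_ [delta [Hdel Hno]]].
  set (nu := bnorm u). assert (Hnu : 0 <= nu) by apply bnorm_nonneg.
  destruct (Htc (delta / (nu + 1)) ltac:(apply Rdiv_lt_0_compat; lra)) as [N1 HN1].
  destruct (Hdc 1 ltac:(lra)) as [N2 HN2].
  set (k := max N (max N1 N2)).
  specialize (HN1 k ltac:(lia)). specialize (HN2 k ltac:(lia)).
  unfold Rdist in HN1, HN2. rewrite Rminus_0_r in HN1, HN2.
  pose proof (Ht k) as Htk.
  rewrite Rabs_right in HN1 by lra.
  rewrite Rabs_right in HN2 by (apply Rle_ge, bnorm_nonneg).
  apply Hno. exists (badd xb (bscal (t k) (dk k))). split; [|split].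
  - rewrite L1, norm_scal_pos by lra.
    assert (Hnd : bnorm (dk k) <= nu + bnorm (bsub (dk k) u)).
    { rewrite (L3 X (dk k) u) at 1. apply bnorm_triangle. }
    assert (Hd1 : bnorm (dk k) < nu + 1) by lra.
    assert (0 <= bnorm (dk k)) by apply bnorm_nonneg.
    assert (t k * (nu + 1) < delta).
    { apply (Rmult_lt_compat_r (nu+1)) in HN1; [|lra].
      field_simplify in HN1; lra. }
    nra.
  - apply Hfe.
  - intros i Hi. apply (HN i Hi k). lia.
Qed.
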